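(* Let $q_1,q_2,q_3,q_4$ satisfy $q_1q_2q_3q_4=1$, let $x$ be a further variable, and let $\rho$ be a finite solid partition. For $k\ge1$ let $\Pi^{(k)}=\{(i,j,l):(i,j,l,k)\in\rho\}$ and $$\boldsymbol{\Pi}^{(k)}=\sum_{(i,j,l)\in\Pi^{(k)}}x\,q_4^{k-1}q_1^{i-1}q_2^{j-1}q_3^{l-1}.$$ Define $$s(\Pi)=\Big[\sum_{i<j}\mathbf P_{123}\,\boldsymbol{\Pi}^{(i)\vee}\boldsymbol{\Pi}^{(j)}\Big]^{(0)}.$$ Then $s(\Pi)\equiv\sigma_4(\rho)\pmod 2$, where $\sigma_4(\rho)=\#\{(i,i,i,j)\in\rho:\ i<j\}$; in particular $(-1)^{s(\Pi)}=(-1)^{\sigma_4(\rho)}$.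
   Context: A finite solid partition is a finite set $\rho\subset\mathbb Z_{\ge1}^4$ such that if $(i_1,\dots,i_4)\in\rho$ and $1\le i'_a\le i_a$ for all $a$ then $(i'_1,\dots,i'_4)\in\rho$. Characters are finite $\mathbb Z$-combinations of Laurent monomials; $\mathbf X^\vee$ replaces each monomial $m$ by $m^{-1}$. $\mathbf P_{123}=(1-q_1)(1-q_2)(1-q_3)$. For a character $\mathbf X$, after substituting $q_4=(q_1q_2q_3)^{-1}$ (the variable $x$ cancels in $\boldsymbol\Pi^{(i)\vee}\boldsymbol\Pi^{(j)}$), $[\mathbf X]^{(0)}\in\mathbb Z$ denotes its unmovable part, i.e. the coefficient of the constant monomial $1$ in the resulting Laurent polynomial in $q_1,q_2,q_3$. *)

(* Defs.v *)
From HB Require Import structures.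
From mathcomp Require Import all_boot all_order all_algebra.
From mathcomp Require Import finmap.
Set Implicit Arguments. Unset Strict Implicit. Unset Printing Implicit Defensive.
Import Order.TTheory GRing.Theory Num.Theory.
Local Open Scope ring_scope.


Definition box := (nat * nat * nat * nat)%type.
Definition b1 (b : box) : nat := b.1.1.1.
Definition b2 (b : box) : nat := b.1.1.2.
Definition b3 (b : box) : nat := b.1.2.
Definition b4 (b : box) : nat := b.2.

Definition solid_partition (rho : {fset box}) : Prop :=
  (forall b, b \in rho -> [/\ (1 <= b1 b)%N, (1 <= b2 b)%N, (1 <= b3 b)%N & (1 <= b4 b)%N])
  /\ (forall b c, b \in rho ->
        [/\ (1 <= b1 c <= b1 b)%N, (1 <= b2 c <= b2 b)%N,
            (1 <= b3 c <= b3 b)%N & (1 <= b4 c <= b4 b)%N] -> c \in rho).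

(* Laurent monomial x^e0 q1^e1 q2^e2 q3^e3 q4^e4, as its exponent vector. *)
Definition mono := (int * int * int * int * int)%type.
Definition mono_mul (m n : mono) : mono :=
  (m.1.1.1.1 + n.1.1.1.1, m.1.1.1.2 + n.1.1.1.2, m.1.1.2 + n.1.1.2,
   m.1.2 + n.1.2, m.2 + n.2).
Definition mono_inv (m : mono) : mono :=
  (- m.1.1.1.1, - m.1.1.1.2, - m.1.1.2, - m.1.2, - m.2).
Definition mono1 : mono := (0, 0, 0, 0, 0).

(* A character: finite Z-combination of Laurent monomials, as a formal sum. *)
Definition character := seq (int * mono).
Definition ch_add (X Y : character) : character := X ++ Y.
Definition ch_mul (X Y : character) : character :=
  [seq (a.1 * b.1, mono_mul a.2 b.2) | a <- X, b <- Y].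
Definition ch_dual (X : character) : character :=
  [seq (a.1, mono_inv a.2) | a <- X].

(* Exponents of (x, q1, q2, q3) after substituting q4 = (q1 q2 q3)^{-1}. *)
Definition subst_q4 (m : mono) : int * int * int * int :=
  (m.1.1.1.1, m.1.1.1.2 - m.2, m.1.1.2 - m.2, m.1.2 - m.2).

(* Unmovable part [X]^(0): coefficient of the constant monomial 1 after
   the substitution q4 = (q1 q2 q3)^{-1}. *)
Definition unmovable (X : character) : int :=
  \sum_(a <- X | subst_q4 a.2 == (0, 0, 0, 0)) a.1.

Definition q1m : mono := (0, 1, 0, 0, 0).
Definition q2m : mono := (0, 0, 1, 0, 0).
Definition q3m : mono := (0, 0, 0, 1, 0).

Definition P123 : character :=
  ch_mul [:: (1, mono1); (-1, q1m)]
    (ch_mul [:: (1, mono1); (-1, q2m)] [:: (1, mono1); (-1, q3m)]).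

Definition box_mono (b : box) : mono :=
  (1, (b1 b)%:Z - 1, (b2 b)%:Z - 1, (b3 b)%:Z - 1, (b4 b)%:Z - 1).
Definition bPi (rho : {fset box}) (k : nat) : character :=
  [seq (1, box_mono b) | b <- rho & b4 b == k].

Definition layer_bound (rho : {fset box}) : nat := (\max_(b <- rho) b4 b).+1.

(* s(Pi) = [ sum_{i<j} P123 Pi^(i)v Pi^(j) ]^(0)  (empty layers contribute 0). *)
Definition s_Pi (rho : {fset box}) : int :=
  unmovable (\big[ch_add/[::]]_(1 <= j < layer_bound rho)
               \big[ch_add/[::]]_(1 <= i < j)
                 ch_mul P123 (ch_mul (ch_dual (bPi rho i)) (bPi rho j))).

Definition sigma4 (rho : {fset box}) : nat :=
  #|` [fset b in rho | (b1 b == b2 b) && (b2 b == b3 b) && (b1 b < b4 b)%N]%fset|%fset.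

(* Main.v *)
Require Import Defs.
From HB Require Import structures.
From mathcomp Require Import all_boot all_order all_algebra.
From mathcomp Require Import finmap.
From mathcomp Require Import zify ring.
Import GRing.Theory.
Local Open Scope ring_scope.

Definition cnd (m : mono) : bool := subst_q4 m == (0, 0, 0, 0).
Definition T (p : int * mono) (a b : box) : int :=
  if cnd (mono_mul p.2 (mono_mul (mono_inv (box_mono a)) (box_mono b)))
  then p.1 * (1 * 1) else 0.

Lemma unm_nil : unmovable [::] = 0.
Proof. by rewrite /unmovable big_nil. Qed.

Lemma unm_cat X Y : unmovable (ch_add X Y) = unmovable X + unmovable Y.
Proof. by rewrite /unmovable /ch_add big_cat. Qed.

Lemma unm_big (I : Type) (r : seq I) (P : pred I) (F : I -> character) :
  unmovable (\big[ch_add/[::]]_(i <- r | P i) F i) = \sum_(i <- r | P i) unmovable (F i).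
Proof. exact: (big_morph unmovable unm_cat unm_nil). Qed.

Lemma unm_mul X Y : unmovable (ch_mul X Y) =
  \sum_(a <- X) \sum_(b <- Y) (if cnd (mono_mul a.2 b.2) then a.1 * b.1 else 0).
Proof. by rewrite /unmovable big_mkcond /ch_mul big_allpairs_dep. Qed.

Lemma unm_term rho i j :
  unmovable (ch_mul P123 (ch_mul (ch_dual (bPi rho i)) (bPi rho j))) =
  \sum_(p <- P123) \sum_(a <- rho | b4 a == i) \sum_(b <- rho | b4 b == j) T p a b.
Proof.
rewrite unm_mul; apply eq_bigr => p _.
rewrite /ch_mul big_allpairs_dep /ch_dual /bPi big_map big_map big_filter.
apply eq_bigr => a _.
by rewrite big_map big_filter.
Qed.

Lemma sum_pick (I : eqType) (r : seq I) (x : I) (F : I -> int) : uniq r ->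
  \sum_(i <- r) (if i == x then F i else 0) = if x \in r then F x else 0.
Proof.
move=> ur; case: ifP => hx.
  rewrite (bigD1_seq x) //= eqxx big1 ?addr0 // => i /negbTE ->; done.
rewrite big1_seq // => i /andP[_ hi]; case: eqP => // e.
by rewrite -e hi in hx.
Qed.

Lemma sum_layers (r : seq box) (lo hi : nat) (G : box -> int) :
  \sum_(lo <= i < hi) \sum_(a <- r | b4 a == i) G a
  = \sum_(a <- r | (lo <= b4 a < hi)%N) G a.
Proof.
under eq_bigr do rewrite big_mkcond.
rewrite exchange_big [RHS]big_mkcond; apply eq_bigr => a _.
under eq_bigr do rewrite eq_sym.
by rewrite sum_pick ?iota_uniq // mem_index_iota.
Qed.

Lemma P123E : P123 =
  [:: (1, (0, 0%N%:Z, 0%N%:Z, 0%N%:Z, 0)); (-1, (0, 0%N%:Z, 0%N%:Z, 1%N%:Z, 0));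
      (-1, (0, 0%N%:Z, 1%N%:Z, 0%N%:Z, 0)); (1, (0, 0%N%:Z, 1%N%:Z, 1%N%:Z, 0));
      (-1, (0, 1%N%:Z, 0%N%:Z, 0%N%:Z, 0)); (1, (0, 1%N%:Z, 0%N%:Z, 1%N%:Z, 0));
      (1, (0, 1%N%:Z, 1%N%:Z, 0%N%:Z, 0)); (-1, (0, 1%N%:Z, 1%N%:Z, 1%N%:Z, 0))].
Proof. by vm_compute. Qed.

Lemma cnd_eq (a1 a2 a3 a4 b1' b2' b3' b4' p1 p2 p3 : nat) :
  (0 < a1)%N -> (0 < a2)%N -> (0 < a3)%N -> (0 < a4 < b4')%N ->
  (p1 <= 1)%N -> (p2 <= 1)%N -> (p3 <= 1)%N ->
  (0 + (-1 + 1) == 0 :> int) &&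
  (p1%:Z + (- (a1%:Z - 1) + (b1'%:Z - 1)) - (0 + (- (a4%:Z - 1) + (b4'%:Z - 1))) == 0) &&
  (p2%:Z + (- (a2%:Z - 1) + (b2'%:Z - 1)) - (0 + (- (a4%:Z - 1) + (b4'%:Z - 1))) == 0) &&
  (p3%:Z + (- (a3%:Z - 1) + (b3'%:Z - 1)) - (0 + (- (a4%:Z - 1) + (b4'%:Z - 1))) == 0) =
  [&& (a1 == (b1' + p1 - (b4' - a4))%N) && (a2 == (b2' + p2 - (b4' - a4))%N) &&
      (a3 == (b3' + p3 - (b4' - a4))%N) && (a4 == (b4' - (b4' - a4))%N),
      (b4' - a4 < b1' + p1)%N, (b4' - a4 < b2' + p2)%N
    & (b4' - a4 < b3' + p3)%N].
Proof. move=> *; lia. Qed.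

Lemma inner rho (c : int) (p1 p2 p3 : nat) b :
  solid_partition rho -> b \in rho -> (p1 <= 1)%N -> (p2 <= 1)%N -> (p3 <= 1)%N ->
  \sum_(a <- rho | (1 <= b4 a < b4 b)%N) T (c, (0, p1%:Z, p2%:Z, p3%:Z, 0)) a b
  = \sum_(1 <= d < b4 b)
      (if [&& (d < b1 b + p1)%N, (d < b2 b + p2)%N & (d < b3 b + p3)%N] then c else 0).
Proof.
move=> [hpos hdown] hb h1 h2 h3.
pose cd d : box := (b1 b + p1 - d, b2 b + p2 - d, b3 b + p3 - d, b4 b - d)%N.
pose pos d := [&& (d < b1 b + p1)%N, (d < b2 b + p2)%N & (d < b3 b + p3)%N].
have hbp := hpos b hb.
transitivity (\sum_(a <- rho) \sum_(1 <= d < b4 b) (if (a == cd d) && pos d then c else 0)).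
  rewrite big_mkcond; apply eq_big_seq => a ha_in.
  have hap := hpos a ha_in.
  case: ifP => ha.
    rewrite (bigD1_seq (b4 b - b4 a)%N) ?iota_uniq //=; last first.
      by rewrite mem_index_iota; lia.
    rewrite big1 ?addr0; last first.
      move=> d hd; case: ifP => // /andP[/eqP ead _].
      move: hd ha; rewrite ead /cd /b4 /=; lia.
    move: hap ha hbp; rewrite /T /cd /pos; clear cd pos.
    case: a {ha_in} => [[[a1 a2] a3] a4]; case: b {hb} => [[[b1' b2'] b3'] b4'].
    rewrite /cnd /subst_q4 /mono_mul /mono_inv /box_mono /b1 /b2 /b3 /b4 /= => hap ha hbp.
    rewrite !mulr1; congr (if _ then _ else _).
    case: hap => ? ? ? ?.
    rewrite !xpair_eqE; exact: cnd_eq.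
  rewrite big1_seq // => d /andP[_ hd]; case: ifP => // /andP[/eqP ead _].
  move: hd ha; rewrite mem_index_iota ead /cd /b4 /=; lia.
rewrite exchange_big; apply eq_big_nat => d hd.
case: ifP => hp; last first.
  by rewrite big1 // => a _; rewrite /pos hp andbF.
under eq_bigr do rewrite /pos hp andbT.
have hcd : cd d \in rho.
  apply: (hdown b (cd d) hb); rewrite /cd /b1 /b2 /b3 /b4 /=.
  move: hbp hp hd; rewrite /b1 /b2 /b3 /b4 /= => -[? ? ? ?] hp hd.
  split; lia.
rewrite (bigD1_seq (cd d)) ?fset_uniq //= eqxx big1 ?addr0 // => a /negbTE ->; done.
Qed.

Definition diag (b : box) : bool := (b1 b == b2 b) && (b2 b == b3 b) && (b1 b < b4 b)%N.

Lemma Vb rho b : solid_partition rho -> b \in rho ->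
  \sum_(a <- rho | (1 <= b4 a < b4 b)%N) \sum_(p <- P123) T p a b
  = if diag b then -1 else 0.
Proof.
move=> hr hb.
under eq_bigr do rewrite P123E !big_cons big_nil addr0.
rewrite !big_split /=.
rewrite !(@inner rho _ _ _ _ b hr hb) //.
rewrite -!big_split /=.
transitivity (\sum_(1 <= d < b4 b)
   (if [&& d == b1 b, d == b2 b & d == b3 b] then (-1 : int) else 0)).
  apply eq_big_nat => d _; rewrite !addn0 !addn1 !ltnS.
  by case: (ltngtP d (b1 b)) => _; case: (ltngtP d (b2 b)) => _;
     case: (ltngtP d (b3 b)) => _.
transitivity (\sum_(1 <= d < b4 b)
   (if d == b1 b then (if (b1 b == b2 b) && (b2 b == b3 b) then (-1 : int) else 0) else 0)).
  apply eq_big_nat => d _.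
  case: (d =P b1 b) => [->|_] //=; rewrite ?eqxx /=.
  by case: (b1 b =P b2 b) => [->|] //=.
rewrite sum_pick ?iota_uniq // mem_index_iota /diag.
have [hp1 _ _ _] := hr.1 b hb.
rewrite hp1 /=.
by case: (b1 b == b2 b); case: (b2 b == b3 b); case: (b1 b < b4 b)%N.
Qed.

Lemma sum_neg (s : seq box) (P : pred box) :
  \sum_(b <- s) (if P b then (-1 : int) else 0) = - (count P s)%:Z.
Proof.
elim: s => [|x s IH]; first by rewrite big_nil.
rewrite big_cons IH /=; case: (P x) => /=; lia.
Qed.

Lemma card_sigma4 rho : sigma4 rho = count diag rho.
Proof.
rewrite /sigma4 -size_filter; apply: perm_size.
apply: uniq_perm; [exact: fset_uniq | exact: filter_uniq (fset_uniq _) |].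
move=> x; rewrite mem_filter !inE /diag andbC.
done.
Qed.

Lemma s_Pi_eq rho : solid_partition rho -> s_Pi rho = - (sigma4 rho)%:Z.
Proof.
move=> hr.
rewrite /s_Pi unm_big.
transitivity (\sum_(1 <= j < layer_bound rho) \sum_(a <- rho | (1 <= b4 a < j)%N)
    \sum_(b <- rho | b4 b == j) \sum_(p <- P123) T p a b).
  apply eq_bigr => j _.
  rewrite unm_big -sum_layers; apply eq_bigr => i _.
  rewrite unm_term exchange_big; apply eq_bigr => a _.
  by rewrite exchange_big.
transitivity (\sum_(1 <= j < layer_bound rho) \sum_(b <- rho | b4 b == j)
    \sum_(a <- rho | (1 <= b4 a < b4 b)%N) \sum_(p <- P123) T p a b).
  apply eq_bigr => j _.
  rewrite exchange_big; apply eq_bigr => b /eqP ->; done.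
rewrite sum_layers big_seq_cond.
transitivity (\sum_(b <- rho | b \in rho) (if diag b then (-1 : int) else 0)); last first.
  by rewrite -big_seq sum_neg card_sigma4.
apply eq_big => b.
  case hb: (b \in rho) => //=.
  have [_ _ _ h4] := hr.1 b hb.
  rewrite h4 /= /layer_bound ltnS.
  by rewrite (leq_bigmax_seq _ hb).
by move=> /andP[hb _]; apply: Vb.
Qed.

Theorem proposition6p8 (rho : {fset box}) :
  solid_partition rho ->
  (s_Pi rho = (sigma4 rho)%:Z %[mod 2])%Z.
Proof.
move=> hr; rewrite s_Pi_eq //.
set n := (sigma4 rho)%:Z.
have -> : - n = (- n) * 2 + n by ring.
by rewrite modzMDl.
Qed.
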